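(* Let $m\in\mathbb{N}$, $a>-1$, and $Q(x)=(x^{4}+2ax^{2}+1)^{-(m+1)}$. For real $y$ define $$Q_{1}(y)=\Big[Q\big(y+\sqrt{y^{2}+1}\big)+Q\big(y-\sqrt{y^{2}+1}\big)\Big]+\frac{y}{\sqrt{y^{2}+1}}\Big[Q\big(y+\sqrt{y^{2}+1}\big)-Q\big(y-\sqrt{y^{2}+1}\big)\Big].$$ Then $$Q_{1}(y)=\frac{T_{m}(2y)}{2^{m}(1+a+2y^{2})^{m+1}},\qquad\text{where } T_{m}(y)=\sum_{k=0}^{m}\binom{m+k}{m-k}y^{2k}.$$ *)

(* Defs.v *)
From Stdlib Require Import Reals.
Open Scope R_scope.

Definition Qf (m : nat) (a x : R) : R :=
  / (x ^ 4 + 2 * a * x ^ 2 + 1) ^ (S m).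

Definition Q1 (m : nat) (a y : R) : R :=
  let s := sqrt (y ^ 2 + 1) in
  (Qf m a (y + s) + Qf m a (y - s))
  + (y / s) * (Qf m a (y + s) - Qf m a (y - s)).

(* T_m(y) = sum_{k=0}^m binom(m+k, m-k) y^(2k); binomial = Stdlib Reals' C
   (here always m-k <= m+k, so C is the usual binomial coefficient) *)
Definition Tm (m : nat) (y : R) : R :=
  sum_f_R0 (fun k => C (m + k) (m - k) * y ^ (2 * k)) m.

(* Main.v *)
Require Import Defs.
From Stdlib Require Import Reals Lra Lia.
Open Scope R_scope.

Fixpoint b (n k : nat) : R :=
  match n, k with
  | O, O => 1
  | O, S _ => 0
  | S _, O => 1
  | S n', S k' => b n' k' + b n' (S k')
  end.

Lemma b_n0 n : b n 0 = 1.
Proof. destruct n; reflexivity. Qed.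

Lemma b_big : forall n k, (n < k)%nat -> b n k = 0.
Proof.
  induction n; intros k H; destruct k; try lia; simpl; auto.
  rewrite !IHn by lia; ring.
Qed.

Lemma C_n0 n : C n 0 = 1.
Proof. unfold C. rewrite Nat.sub_0_r. simpl. field. apply INR_fact_neq_0. Qed.
Lemma C_nn n : C n n = 1.
Proof. unfold C. rewrite Nat.sub_diag. simpl. field. apply INR_fact_neq_0. Qed.

Lemma b_C : forall n k, (k <= n)%nat -> b n k = C n k.
Proof.
  induction n; intros k H.
  - destruct k; [|lia]. simpl. rewrite C_n0. reflexivity.
  - destruct k. rewrite b_n0, C_n0; reflexivity.
    simpl. destruct (Nat.eq_dec k n) as [->|Hne].
    + rewrite IHn by lia. rewrite b_big by lia. rewrite !C_nn. ring.
    + rewrite !IHn by lia. apply pascal. lia.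
Qed.

Definition A (x : R) (m : nat) := sum_f_R0 (fun k => b (m+k) (m-k) * x^(2*k)) m.
Definition B (x : R) (m : nat) := sum_f_R0 (fun k => b (S m+k) (m-k) * x^(2*k+1)) m.

Lemma A_S x m : A x (S m) = A x m + x * B x m.
Proof.
  unfold A, B. rewrite tech5.
  rewrite (sum_eq _ (fun k => b (m+k) (m-k) * x^(2*k) + b (m+k) (S m - k) * x^(2*k))).
  2:{ intros i Hi. replace (S m + i)%nat with (S (m+i)) by lia.
      replace (S m - i)%nat with (S (m-i)) by lia. simpl b. ring. }
  rewrite sum_plus. rewrite Rplus_assoc. f_equal.
  replace (S m - S m)%nat with 0%nat by lia. rewrite b_n0.
  set (h := fun k => b (m+k) (S m - k) * x^(2*k)).
  replace (1 * x ^ (2 * S m)) with (h (S m)).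
  2:{ unfold h. replace (S m - S m)%nat with 0%nat by lia. rewrite b_n0. reflexivity. }
  rewrite <- tech5. rewrite decomp_sum by lia. simpl pred.
  unfold h at 1. rewrite Nat.add_0_r, b_big by lia. rewrite Rmult_0_l, Rplus_0_l.
  rewrite scal_sum. apply sum_eq. intros i Hi. unfold h.
  replace (m + S i)%nat with (S m + i)%nat by lia.
  replace (S m - S i)%nat with (m - i)%nat by lia.
  replace (2 * S i)%nat with (S (2*i+1)) by lia. simpl. ring.
Qed.

Lemma B_S x m : B x (S m) = B x m + x * A x (S m).
Proof.
  unfold A, B. rewrite tech5.
  rewrite (sum_eq _ (fun k => b (S m+k) (m-k) * x^(2*k+1) + b (S m+k) (S m - k) * x^(2*k+1))).
  2:{ intros i Hi. replace (S (S m) + i)%nat with (S (S m+i)) by lia.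
      replace (S m - i)%nat with (S (m-i)) by lia. simpl b. ring. }
  rewrite sum_plus. rewrite Rplus_assoc. f_equal.
  rewrite scal_sum. rewrite tech5. f_equal.
  - apply sum_eq. intros i Hi. replace (2*i+1)%nat with (S (2*i)) by lia. simpl. ring.
  - replace (S m - S m)%nat with 0%nat by lia. rewrite !b_n0.
    replace (2*S m+1)%nat with (S (2*S m)) by lia. simpl. ring.
Qed.

Lemma powdiff u v x m : u + v = x -> u * v = -1 ->
  u^(2*m+1) - v^(2*m+1) = (u - v) * A x m /\
  u^(2*m+2) - v^(2*m+2) = (u - v) * B x m.
Proof.
  intros Hx Hp.
  assert (R2 : forall n, u^(S (S n)) - v^(S (S n)) = x * (u^(S n) - v^(S n)) + (u^n - v^n)).
  { intros n. rewrite <- Hx. simpl. replace (u^n - v^n) with (-(u*v)*(u^n - v^n)) by (rewrite Hp; ring). ring. }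
  induction m.
  - unfold A, B. simpl. split; [ring|]. rewrite <- Hx. ring.
  - destruct IHm as [I1 I2]. rewrite B_S, A_S.
    assert (E1 : u^(2*S m+1) - v^(2*S m+1) = (u-v) * (A x m + x * B x m)).
    { replace (2*S m+1)%nat with (S (S (2*m+1))) by lia. rewrite R2.
      replace (S (2*m+1)) with (2*m+2)%nat by lia. rewrite I1, I2. ring. }
    split; [exact E1|].
    replace (2*S m+2)%nat with (S (S (2*m+2))) by lia. rewrite R2.
    replace (S (2*m+2)) with (2*S m+1)%nat by lia. rewrite E1, I2. ring.
Qed.

Lemma Du u v y a : u + v = 2*y -> u*v = -1 ->
  u^4 + 2*a*u^2 + 1 = 2*u^2*(1+a+2*y^2).
Proof.
  intros H1 H2. assert (Hy : y = (u+v)/2) by lra. subst y.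
  assert (E : u^4 + 2*a*u^2 + 1 - 2*u^2*(1+a+2*((u+v)/2)^2) = (1+u*v)*(1-u*v-2*u^2)) by (field).
  rewrite H2 in E. lra.
Qed.

Lemma invpow u v c k : u*v = -1 -> c <> 0 ->
  / (2*u^2*c)^k = (v^2)^k / (2*c)^k.
Proof.
  intros H Hc.
  assert (P : (u^2)^k * (v^2)^k = 1).
  { rewrite <- Rpow_mult_distr. replace (u^2*v^2) with ((u*v)^2) by ring.
    rewrite H. replace ((-1)^2) with 1 by ring. apply pow1. }
  assert (Hu : (u^2)^k <> 0). { intro Z. rewrite Z in P. lra. }
  assert (Hc2 : (2*c)^k <> 0). { apply pow_nonzero. lra. }
  replace (2*u^2*c) with ((2*c)*u^2) by ring. rewrite Rpow_mult_distr.
  rewrite Rinv_mult. unfold Rdiv. rewrite Rmult_comm. f_equal.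
  apply Rmult_eq_reg_l with ((u^2)^k); auto. rewrite Rinv_r; auto.
Qed.

Lemma pow_split v m : (v^2)^(S m) = v * v^(2*m+1).
Proof. rewrite <- pow_mult. replace (2 * S m)%nat with (S (2*m+1)) by lia. reflexivity. Qed.

Theorem mainTheorem4 (m : nat) (a : R) (ha : -1 < a) (y : R) :
  Q1 m a y = Tm m (2 * y) / (2 ^ m * (1 + a + 2 * y ^ 2) ^ (S m)).
Proof.
  unfold Q1. cbv zeta.
  assert (Hpos : 0 < y^2+1) by (pose proof (pow2_ge_0 y); lra).
  pose proof (sqrt_lt_R0 _ Hpos) as Hs0.
  pose proof (sqrt_sqrt _ (Rlt_le _ _ Hpos)) as Hss.
  set (s := sqrt (y^2+1)) in *.
  set (W := 1 + a + 2*y^2).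
  assert (HW : 0 < W) by (unfold W; pose proof (pow2_ge_0 y); lra).
  assert (Hsum : (y+s) + (y-s) = 2*y) by ring.
  assert (Hprod : (y+s)*(y-s) = -1) by (replace ((y+s)*(y-s)) with (y*y - s*s) by ring; rewrite Hss; ring).
  assert (Hprod' : (y-s)*(y+s) = -1) by lra.
  unfold Qf.
  rewrite (Du _ _ _ a Hsum Hprod).
  rewrite (Du (y-s) (y+s) y a) by lra.
  fold W.
  rewrite (invpow _ _ _ _ Hprod) by lra.
  rewrite (invpow _ _ _ _ Hprod') by lra.
  rewrite !pow_split.
  assert (HT : Tm m (2*y) = A (2*y) m).
  { unfold Tm, A. apply sum_eq. intros i Hi. rewrite b_C by lia. reflexivity. }
  rewrite HT.
  destruct (powdiff (y+s) (y-s) (2*y) m Hsum Hprod) as [P1 _].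
  replace (A (2*y) m) with (((y+s)^(2*m+1) - (y-s)^(2*m+1)) / (2*s)).
  2:{ rewrite P1. field. lra. }
  set (al := (y+s)^(2*m+1)). set (be := (y-s)^(2*m+1)).
  rewrite Rpow_mult_distr. simpl (2 ^ S m).
  assert (HWm : W^(S m) <> 0) by (apply pow_nonzero; lra).
  assert (H2m : 2^m <> 0) by (apply pow_nonzero; lra).
  assert (E1 : (s+y)*(y-s) = -1) by lra.
  assert (E2 : (s-y)*(y+s) = 1) by lra.
  transitivity ((be*((s+y)*(y-s)) + al*((s-y)*(y+s))) / (2*2^m*W^(S m)*s)).
  { field. repeat split; lra. }
  rewrite E1, E2. field. repeat split; lra.
Qed.
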